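(* Let $N$ be a positive integer and $t>-\log N$. For integers $n\ge N$ let $$\theta_n(t,N)=\int_N^n\frac{dx}{t+\log x}-\sum_{k=N}^{n-1}\frac{1}{H_k-\gamma+t}.$$ (1) The sequence $(\theta_n(t,N))_{n>N}$ is positive, strictly increasing and bounded above; hence $\theta(t,N)=\lim_{n\to\infty}\theta_n(t,N)>0$ exists. (2) For all integers $n\ge N$ one has $\theta(t,N)-\theta_n(t,N)=\theta(t,n)$ and $$\int_{n+1}^\infty\frac{dx}{24x^2(t+\log x)^2}+\frac{1}{24(n+1)(t+\log(n+1))^2}\le\theta(t,n)$$ $$\le\int_n^\infty\frac{dx}{24x^2(t+\log x)^2}+\frac{1}{24(n+\frac12)(t+\log(n+\frac12))^2}+\frac{1}{24n^2(t+\log n)^2}+\frac{1}{12n^2(t+\log n)^3}.$$ (3) $\theta(t,N)=\theta_n(t,N)+\frac{1+o(1)}{12n(\log n)^2}$ as $n\to\infty$, and $\theta(t,N)=O\!\left(\frac{1}{Nt^2}\right)$ as $t\to\infty$, where the implied constant does not depend on $N$.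
   Context: $\gamma$ is the Euler–Mascheroni constant and $H_k=\sum_{j=1}^k1/j$ is the $k$-th harmonic number. *)

(* Defs.v *)
From Stdlib Require Import Reals Lra Lia List Classical ClassicalEpsilon.
Open Scope R_scope.

Fixpoint harm (k : nat) : R :=
  match k with
  | O => 0
  | S k' => harm k' + / INR (S k')
  end.

(* sum_{k=a}^{b-1} f k  (empty if b <= a) *)
Definition sum_range (f : nat -> R) (a b : nat) : R :=
  fold_right Rplus 0 (map f (seq a (b - a))).

(* Riemann integral of f over [a,b] (Stdlib's RiemannInt); 0 if not integrable.
   RiemannInt does not depend on the integrability proof (RiemannInt_P5). *)
Definition RInt (f : R -> R) (a b : R) : R :=
  match excluded_middle_informative (inhabited (Riemann_integrable f a b)) with
  | left H => RiemannInt (epsilon H (fun _ => True))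
  | right _ => 0
  end.

Definition improper_int_cv (f : R -> R) (a l : R) : Prop :=
  forall eps, 0 < eps -> exists M, forall b, M <= b -> Rabs (RInt f a b - l) < eps.

Definition theta_n (gamma t : R) (N n : nat) : R :=
  RInt (fun x => / (t + ln x)) (INR N) (INR n)
  - sum_range (fun k => / (harm k - gamma + t)) N n.

(* theta(t,N) = lim_{n -> oo} theta_n(t,N) (an arbitrary value if no limit) *)
Definition theta (gamma t : R) (N : nat) : R :=
  epsilon (inhabits 0) (fun l => Un_cv (fun n => theta_n gamma t N n) l).

(* Main.v *)
Require Import Defs.
From Stdlib Require Import Reals Lra Lia List Classical ClassicalEpsilon ZArith.
From Coquelicot Require Import Coquelicot.
Open Scope R_scope.

Lemma deriv_cont (h dh : R -> R) x : is_derive h x (dh x) -> continuity_pt h x.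
Proof.
  intros H. apply continuity_pt_filterlim. apply (@ex_derive_continuous R_AbsRing R_NormedModule). exists (dh x). exact H.
Qed.

Lemma incr_on (h dh : R -> R) a b :
  (forall x, a <= x <= b -> is_derive h x (dh x)) ->
  (forall x, a <= x <= b -> 0 <= dh x) ->
  forall x y, a <= x -> x <= y -> y <= b -> h x <= h y.
Proof.
  intros Hd Hp x y Hax Hxy Hyb.
  destruct (MVT_gen h x y dh) as [c [Hc Heq]].
  - intros z Hz. rewrite Rmin_left in Hz by lra. rewrite Rmax_right in Hz by lra.
    apply Hd; lra.
  - intros z Hz. rewrite Rmin_left in Hz by lra. rewrite Rmax_right in Hz by lra.
    apply (deriv_cont h dh). apply Hd; lra.
  - rewrite Rmin_left in Hc by lra. rewrite Rmax_right in Hc by lra.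
    assert (0 <= dh c) by (apply Hp; lra).
    assert (0 <= dh c * (y - x)) by (apply Rmult_le_pos; lra). lra.
Qed.

Lemma decr_on (h dh : R -> R) a b :
  (forall x, a <= x <= b -> is_derive h x (dh x)) ->
  (forall x, a <= x <= b -> dh x <= 0) ->
  forall x y, a <= x -> x <= y -> y <= b -> h y <= h x.
Proof.
  intros Hd Hp x y Hax Hxy Hyb.
  assert (H := incr_on (fun z => - h z) (fun z => - dh z) a b).
  assert (- h x <= - h y); [|lra].
  apply H; auto.
  - intros z Hz. apply (is_derive_opp h). apply Hd; auto.
  - intros z Hz. specialize (Hp z Hz). lra.
Qed.

Lemma tangent (h dh ddh : R -> R) a b m x :
  (forall z, a <= z <= b -> is_derive h z (dh z)) ->
  (forall z, a <= z <= b -> is_derive dh z (ddh z)) ->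
  (forall z, a <= z <= b -> 0 <= ddh z) ->
  a <= m <= b -> a <= x <= b -> h m + dh m * (x - m) <= h x.
Proof.
  intros H1 H2 H3 Hm Hx.
  destruct (Rle_or_lt m x) as [Hmx|Hxm].
  - destruct (MVT_gen h m x dh) as [c [Hc Heq]].
    + intros z Hz. rewrite Rmin_left in Hz by lra. rewrite Rmax_right in Hz by lra.
      apply H1; lra.
    + intros z Hz. rewrite Rmin_left in Hz by lra. rewrite Rmax_right in Hz by lra.
      apply (deriv_cont h dh). apply H1; lra.
    + rewrite Rmin_left in Hc by lra. rewrite Rmax_right in Hc by lra.
      assert (dh m <= dh c) by (apply (incr_on dh ddh a b); auto; lra).
      assert (dh m * (x - m) <= dh c * (x - m)) by (apply Rmult_le_compat_r; lra). lra.
  - destruct (MVT_gen h x m dh) as [c [Hc Heq]].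
    + intros z Hz. rewrite Rmin_left in Hz by lra. rewrite Rmax_right in Hz by lra.
      apply H1; lra.
    + intros z Hz. rewrite Rmin_left in Hz by lra. rewrite Rmax_right in Hz by lra.
      apply (deriv_cont h dh). apply H1; lra.
    + rewrite Rmin_left in Hc by lra. rewrite Rmax_right in Hc by lra.
      assert (dh c <= dh m) by (apply (incr_on dh ddh a b); auto; lra).
      assert (dh c * (m - x) <= dh m * (m - x)) by (apply Rmult_le_compat_r; lra). lra.
Qed.
Definition f0 (t x : R) := / (t + ln x).
Definition f1 (t x : R) := - / (x * (t + ln x) ^ 2).
Definition f2 (t x : R) := (t + ln x + 2) / (x ^ 2 * (t + ln x) ^ 3).
Definition f3 (t x : R) := - (2 * (t + ln x) ^ 2 + 6 * (t + ln x) + 6) / (x ^ 3 * (t + ln x) ^ 4).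
Definition f4 (t x : R) := (6 * (t + ln x) ^ 3 + 22 * (t + ln x) ^ 2 + 36 * (t + ln x) + 24) / (x ^ 4 * (t + ln x) ^ 5).
Definition g0 (t x : R) := / (24 * x ^ 2 * (t + ln x) ^ 2).
Definition g1 (t x : R) := - (t + ln x + 1) / (12 * x ^ 3 * (t + ln x) ^ 3).
Definition g2 (t x : R) := (3 * (t + ln x) ^ 2 + 5 * (t + ln x) + 3) / (12 * x ^ 4 * (t + ln x) ^ 4).
Definition PP (t x : R) := / (24 * x * (t + ln x) ^ 2).
Definition mf2 (t x : R) := - (f2 t x / 24).

Ltac postac := repeat (apply Rmult_lt_0_compat || apply pow_lt || apply Rinv_0_lt_compat); try lra.
Ltac nztac := repeat split; try lra; try (apply Rgt_not_eq; postac).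
Ltac dtac := intros Hx HL; auto_derive; [nztac | field; nztac].

Lemma d_f0 t x : 0 < x -> 0 < t + ln x -> is_derive (f0 t) x (f1 t x).
Proof. unfold f0, f1. dtac. Qed.
Lemma d_f1 t x : 0 < x -> 0 < t + ln x -> is_derive (f1 t) x (f2 t x).
Proof. unfold f1, f2. dtac. Qed.
Lemma d_f2 t x : 0 < x -> 0 < t + ln x -> is_derive (f2 t) x (f3 t x).
Proof. unfold f2, f3. dtac. Qed.
Lemma d_f3 t x : 0 < x -> 0 < t + ln x -> is_derive (f3 t) x (f4 t x).
Proof. unfold f3, f4. dtac. Qed.
Lemma d_g0 t x : 0 < x -> 0 < t + ln x -> is_derive (g0 t) x (g1 t x).
Proof. unfold g0, g1. dtac. Qed.
Lemma d_g1 t x : 0 < x -> 0 < t + ln x -> is_derive (g1 t) x (g2 t x).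
Proof. unfold g1, g2. dtac. Qed.
Lemma d_PP t x : 0 < x -> 0 < t + ln x -> is_derive (PP t) x (mf2 t x).
Proof. unfold PP, mf2, f2. dtac. Qed.

Lemma RInt_eq (h : R -> R) a b : ex_RInt h a b -> Defs.RInt h a b = RInt h a b.
Proof.
  intros H. unfold Defs.RInt.
  destruct (excluded_middle_informative _) as [Hi|Hn].
  - symmetry. apply RInt_Reals.
  - exfalso. apply Hn. constructor. apply ex_RInt_Reals_0. exact H.
Qed.

Lemma deriv_continuous (h dh : R -> R) x : is_derive h x (dh x) -> continuous h x.
Proof. intros H. apply (@ex_derive_continuous R_AbsRing R_NormedModule). exists (dh x). exact H. Qed.

Lemma exRI (h dh : R -> R) a b : a <= b ->
  (forall z, a <= z <= b -> is_derive h z (dh z)) -> ex_RInt h a b.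
Proof.
  intros Hab Hd. apply (@ex_RInt_continuous R_CompleteNormedModule). intros z Hz.
  rewrite Rmin_left in Hz by lra. rewrite Rmax_right in Hz by lra.
  apply (deriv_continuous h dh). apply Hd; lra.
Qed.

Lemma FTC (F dF : R -> R) a b : a <= b ->
  (forall z, a <= z <= b -> is_derive F z (dF z)) ->
  (forall z, a <= z <= b -> continuous dF z) ->
  RInt dF a b = F b - F a.
Proof.
  intros Hab Hd Hc. apply is_RInt_unique.
  apply (is_RInt_derive F dF a b).
  - intros z Hz. rewrite Rmin_left in Hz by lra. rewrite Rmax_right in Hz by lra. apply Hd; lra.
  - intros z Hz. rewrite Rmin_left in Hz by lra. rewrite Rmax_right in Hz by lra. apply Hc; lra.
Qed.

Lemma is_derive_Rminus (u v : R -> R) x du dv :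
  is_derive u x du -> is_derive v x dv -> is_derive (fun z => u z - v z) x (du - dv).
Proof. intros H1 H2. exact (is_derive_minus u v x du dv H1 H2). Qed.

Lemma is_derive_Ropp (u : R -> R) x du :
  is_derive u x du -> is_derive (fun z => - u z) x (- du).
Proof. intros H1. exact (is_derive_opp u x du H1). Qed.

Lemma quad_int A B C a :
  RInt (fun z => A + B * (z - (a + /2)) + C * (z - (a + /2)) ^ 2 / 2) a (a + 1) = A + C / 24.
Proof.
  rewrite (FTC (fun z => A * z + B * (z - (a + /2)) ^ 2 / 2 + C * (z - (a + /2)) ^ 3 / 6)
     (fun z => A + B * (z - (a + /2)) + C * (z - (a + /2)) ^ 2 / 2)).
  - simpl. field.
  - lra.
  - intros z Hz. auto_derive; auto. field.
  - intros z Hz. apply (deriv_continuous _ (fun z => B + C * (z - (a + /2)))).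
    auto_derive; auto. field.
Qed.

Lemma midpoint_low (h dh ddh : R -> R) a c :
  (forall z, a <= z <= a + 1 -> is_derive h z (dh z)) ->
  (forall z, a <= z <= a + 1 -> is_derive dh z (ddh z)) ->
  (forall z, a <= z <= a + 1 -> c <= ddh z) ->
  h (a + /2) + c / 24 <= RInt h a (a + 1).
Proof.
  intros H1 H2 H3.
  set (m := a + /2).
  assert (Ht : forall z, a <= z <= a + 1 ->
     h m + dh m * (z - m) + c * (z - m) ^ 2 / 2 <= h z).
  { intros z Hz.
    assert (T := tangent (fun z => h z - c * (z - m) ^ 2 / 2) (fun z => dh z - c * (z - m))
                  (fun z => ddh z - c) a (a + 1) m z).
    simpl in T. 
    assert (h m - c * ((m - m) * ((m - m) * 1)) / 2 + (dh m - c * (m - m)) * (z - m) <=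
       h z - c * ((z - m) * ((z - m) * 1)) / 2).
    { apply T.
      - intros y Hy. apply is_derive_Rminus. apply H1; auto.
        auto_derive; auto. field.
      - intros y Hy. apply is_derive_Rminus. apply H2; auto.
        auto_derive; auto. field.
      - intros y Hy. specialize (H3 y Hy). lra.
      - unfold m; lra.
      - lra. }
    simpl. nra. }
  rewrite <- (quad_int (h m) (dh m) c a). fold m.
  apply RInt_le.
  - lra.
  - apply (@ex_RInt_continuous R_CompleteNormedModule). intros z _.
    apply (deriv_continuous _ (fun z => dh m + c * (z - m))). auto_derive; auto. field.
  - apply (exRI h dh). lra. auto.
  - intros z Hz. apply Ht. lra.
Qed.

Lemma midpoint_up (h dh ddh : R -> R) a c :
  (forall z, a <= z <= a + 1 -> is_derive h z (dh z)) ->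
  (forall z, a <= z <= a + 1 -> is_derive dh z (ddh z)) ->
  (forall z, a <= z <= a + 1 -> ddh z <= c) ->
  RInt h a (a + 1) <= h (a + /2) + c / 24.
Proof.
  intros H1 H2 H3.
  assert (H := midpoint_low (fun z => - h z) (fun z => - dh z) (fun z => - ddh z) a (- c)).
  assert (Hex : ex_RInt h a (a + 1)) by (apply (exRI h dh); [lra | auto]).
  assert (E : RInt (fun z => - h z) a (a + 1) = - RInt h a (a + 1)).
  { exact (RInt_opp h a (a + 1) Hex). }
  rewrite E in H.
  assert (- h (a + / 2) + - c / 24 <= - RInt h a (a + 1)); [|lra].
  apply H.
  + intros z Hz. apply is_derive_Ropp. auto.
  + intros z Hz. apply is_derive_Ropp. auto.
  + intros z Hz. specialize (H3 z Hz). lra.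
Qed.

Lemma ln_le' x y : 0 < x -> x <= y -> ln x <= ln y.
Proof. intros Hx Hxy. destruct (Req_dec x y) as [->|Hn]; [lra|].
  left. apply ln_increasing; lra. Qed.

Lemma ln_1p_le y : 0 < 1 + y -> ln (1 + y) <= y.
Proof. intros H. rewrite <- (ln_exp y) at 2. apply ln_le'; auto. apply exp_ineq1_le. Qed.

Lemma log_ineq u : 0 <= u < 1 ->
  2 * u + 2 * u ^ 3 / 3 <= ln (1 + u) - ln (1 - u) <=
  2 * u + (2 * u ^ 3 / 3) / (1 - u ^ 2).
Proof.
  intros Hu. split.
  - assert (H := incr_on (fun s => ln (1 + s) - ln (1 - s) - (2 * s + 2 * s ^ 3 / 3))
                 (fun s => 2 * s ^ 4 / (1 - s ^ 2)) 0 u).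
    assert (H0 : ln (1 + 0) - ln (1 - 0) - (2 * 0 + 2 * 0 ^ 3 / 3) = 0).
    { replace (1 + 0) with 1 by lra. replace (1 - 0) with 1 by lra. rewrite ln_1. simpl. field. }
    cut (0 <= ln (1 + u) - ln (1 - u) - (2 * u + 2 * u ^ 3 / 3)); [lra|].
    rewrite <- H0. apply H; try lra.
    + intros z Hz. auto_derive.
      * repeat split; lra.
      * field. nztac. nra.
    + intros z Hz. apply Rmult_le_pos.
      * assert (0 <= z ^ 4) by (apply pow_le; lra). lra.
      * left. apply Rinv_0_lt_compat. nra.
  - assert (H := incr_on (fun s => 2 * s + (2 * s ^ 3 / 3) / (1 - s ^ 2) - (ln (1 + s) - ln (1 - s)))
                 (fun s => (4 / 3) * s ^ 4 / (1 - s ^ 2) ^ 2) 0 u).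
    assert (H0 : 2 * 0 + (2 * 0 ^ 3 / 3) / (1 - 0 ^ 2) - (ln (1 + 0) - ln (1 - 0)) = 0).
    { replace (1 + 0) with 1 by lra. replace (1 - 0) with 1 by lra. rewrite ln_1. simpl. field. }
    cut (0 <= 2 * u + (2 * u ^ 3 / 3) / (1 - u ^ 2) - (ln (1 + u) - ln (1 - u))); [lra|].
    rewrite <- H0. apply H; try lra.
    + intros z Hz. assert (0 < 1 - z ^ 2) by nra. auto_derive.
      * repeat split; try lra.
      * field. nztac.
    + intros z Hz. assert (0 < 1 - z ^ 2) by nra. apply Rmult_le_pos.
      * assert (0 <= z ^ 4) by (apply pow_le; lra). lra.
      * left. apply Rinv_0_lt_compat. apply pow_lt. lra.
Qed.

Definition Dk (gamma : R) (k : nat) := harm k - gamma - ln (INR k + /2).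

Lemma step_bounds gamma k :
  / (24 * (INR k + 1) ^ 2) - / (24 * (INR k + 2) ^ 2) <= Dk gamma k - Dk gamma (S k) <=
  / (24 * (INR k + /2) ^ 2) - / (24 * (INR k + 3/2) ^ 2).
Proof.
  assert (Hk := pos_INR k).
  set (x := INR k + 1).
  assert (Hx : 1 <= x) by (unfold x; lra).
  set (u := / (2 * x)).
  assert (Hu : 0 <= u < 1).
  { unfold u. split. left. apply Rinv_0_lt_compat. lra.
    apply (Rmult_lt_reg_l (2 * x)). lra. rewrite Rinv_r by lra. lra. }
  assert (E : Dk gamma k - Dk gamma (S k) = (ln (1 + u) - ln (1 - u)) - 2 * u).
  { unfold Dk. change (harm (S k)) with (harm k + / INR (S k)). rewrite S_INR.
    assert (E1 : INR k + 1 + / 2 = x * (1 + u)) by (unfold u, x; field; lra).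
    assert (E2 : INR k + / 2 = x * (1 - u)) by (unfold u, x; field; lra).
    rewrite E1, E2.
    rewrite !ln_mult by lra.
    replace (/ (INR k + 1)) with (2 * u) by (unfold u, x; field; lra). ring. }
  rewrite E. destruct (log_ineq u Hu) as [L U].
  replace (INR k + 2) with (x + 1) by (unfold x; ring).
  replace (INR k + 1) with x by (unfold x; ring).
  replace (INR k + / 2) with (x - /2) by (unfold x; field).
  replace (INR k + 3 / 2) with (x + /2) by (unfold x; field).
  split.
  - apply Rle_trans with (2 * u ^ 3 / 3); [|lra].
    unfold u.
    assert (D : 2 * (/ (2 * x)) ^ 3 / 3 - (/ (24 * x ^ 2) - / (24 * (x + 1) ^ 2))
                = (3 * x + 2) / (24 * x ^ 3 * (x + 1) ^ 2)) by (field; lra).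
    assert (0 <= (3 * x + 2) / (24 * x ^ 3 * (x + 1) ^ 2)).
    { apply Rmult_le_pos. lra. left. apply Rinv_0_lt_compat. postac. }
    lra.
  - apply Rle_trans with ((2 * u ^ 3 / 3) / (1 - u ^ 2)); [lra|].
    unfold u.
    assert (D : (/ (24 * (x - / 2) ^ 2) - / (24 * (x + / 2) ^ 2))
                 - (2 * (/ (2 * x)) ^ 3 / 3) / (1 - (/ (2 * x)) ^ 2)
                = / (48 * x * (x - /2) ^ 2 * (x + /2) ^ 2)).
    { field. repeat split; try lra. nra. }
    assert (0 <= / (48 * x * (x - /2) ^ 2 * (x + /2) ^ 2)).
    { left. apply Rinv_0_lt_compat. postac. }
    lra.
Qed.

Lemma cv_le (u : nat -> R) l A n0 : Un_cv u l -> (forall n, (n0 <= n)%nat -> u n <= A) -> l <= A.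
Proof.
  intros Hu Hb. destruct (Rle_or_lt l A) as [H|H]; auto.
  destruct (Hu (l - A)) as [N HN]; [lra|].
  specialize (HN (max N n0) (Nat.le_max_l _ _)). specialize (Hb (max N n0) (Nat.le_max_r _ _)).
  unfold R_dist in HN. apply Rabs_def2 in HN. lra.
Qed.

Lemma cv_ge (u : nat -> R) l A n0 : Un_cv u l -> (forall n, (n0 <= n)%nat -> A <= u n) -> A <= l.
Proof.
  intros Hu Hb. destruct (Rle_or_lt A l) as [H|H]; auto.
  destruct (Hu (A - l)) as [N HN]; [lra|].
  specialize (HN (max N n0) (Nat.le_max_l _ _)). specialize (Hb (max N n0) (Nat.le_max_r _ _)).
  unfold R_dist in HN. apply Rabs_def2 in HN. lra.
Qed.

Lemma cv0_bound (v : nat -> R) : (forall n, (1 <= n)%nat -> 0 <= v n <= / INR n) -> Un_cv v 0.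
Proof.
  intros Hb eps Heps. destruct (archimed_cor1 eps Heps) as [N [HN HN0]].
  exists N. intros n Hn. unfold R_dist. rewrite Rminus_0_r.
  assert (H1 : (1 <= n)%nat) by lia. destruct (Hb n H1) as [B1 B2].
  rewrite Rabs_right by lra.
  apply Rle_lt_trans with (/ INR n); auto. apply Rle_lt_trans with (/ INR N); auto.
  apply Rinv_le_contravar. apply lt_0_INR; lia. apply le_INR; lia.
Qed.

Lemma Dk_cv gamma : Un_cv (fun n => harm n - ln (INR n)) gamma -> Un_cv (Dk gamma) 0.
Proof.
  intros Hg eps Heps.
  destruct (Hg (eps / 2)) as [N1 HN1]; [lra|].
  destruct (archimed_cor1 eps Heps) as [N2 [HN2 HN20]].
  exists (max N1 N2). intros n Hn.
  assert (Hn1 : (n >= N1)%nat) by lia.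
  specialize (HN1 n Hn1). unfold R_dist in *. rewrite Rminus_0_r.
  assert (Hnpos : 0 < INR n) by (apply lt_0_INR; lia).
  assert (E : ln (INR n + / 2) = ln (INR n) + ln (1 + / (2 * INR n))).
  { rewrite <- ln_mult. f_equal. field. lra. lra.
    assert (0 < / (2 * INR n)) by (apply Rinv_0_lt_compat; lra). lra. }
  assert (B1 : 0 <= ln (1 + / (2 * INR n)) <= / (2 * INR n)).
  { assert (0 < / (2 * INR n)) by (apply Rinv_0_lt_compat; lra).
    split. rewrite <- ln_1. apply ln_le'; lra. apply ln_1p_le. lra. }
  assert (B2 : / (2 * INR n) <= / INR N2 / 2).
  { rewrite Rinv_mult. unfold Rdiv. rewrite Rmult_comm. apply Rmult_le_compat_r. lra.
    apply Rinv_le_contravar. apply lt_0_INR; lia. apply le_INR; lia. }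
  unfold Dk. rewrite E.
  apply Rabs_def2 in HN1. apply Rabs_def1; lra.
Qed.

Lemma D_low gamma : Un_cv (fun n => harm n - ln (INR n)) gamma ->
  forall k, / (24 * (INR k + 1) ^ 2) <= Dk gamma k.
Proof.
  intros Hg k.
  set (w := fun M => Dk gamma M - / (24 * (INR M + 1) ^ 2)).
  assert (Hs : forall M, w (S M) <= w M).
  { intros M. unfold w. rewrite S_INR. destruct (step_bounds gamma M) as [L _].
    replace (INR M + 1 + 1) with (INR M + 2) by ring. lra. }
  assert (Hm : forall M, (k <= M)%nat -> w M <= w k).
  { intros M HM. induction HM. lra. specialize (Hs m). lra. }
  assert (Hc : Un_cv w 0).
  { unfold w. replace 0 with (0 - 0) by ring. apply CV_minus. apply Dk_cv; auto.
    apply cv0_bound. intros n Hn. assert (0 < INR n) by (apply lt_0_INR; lia). split.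
    left. apply Rinv_0_lt_compat. postac.
    apply Rinv_le_contravar. auto. nra. }
  assert (0 <= w k). { apply (cv_le w 0 (w k) k Hc). intros n Hn. apply Hm. auto. }
  unfold w in H. lra.
Qed.

Lemma D_up gamma : Un_cv (fun n => harm n - ln (INR n)) gamma ->
  forall k, Dk gamma k <= / (24 * (INR k + / 2) ^ 2).
Proof.
  intros Hg k.
  set (w := fun M => Dk gamma M - / (24 * (INR M + / 2) ^ 2)).
  assert (Hs : forall M, w M <= w (S M)).
  { intros M. unfold w. rewrite S_INR. destruct (step_bounds gamma M) as [_ U].
    replace (INR M + 1 + / 2) with (INR M + 3 / 2) by field. lra. }
  assert (Hm : forall M, (k <= M)%nat -> w k <= w M).
  { intros M HM. induction HM. lra. specialize (Hs m). lra. }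
  assert (Hc : Un_cv w 0).
  { unfold w. replace 0 with (0 - 0) by ring. apply CV_minus. apply Dk_cv; auto.
    apply cv0_bound. intros n Hn. assert (1 <= INR n) by (replace 1 with (INR 1) by reflexivity; apply le_INR; lia). split.
    left. apply Rinv_0_lt_compat. postac.
    apply Rinv_le_contravar. lra. nra. }
  assert (w k <= 0). { apply (cv_ge w 0 (w k) k Hc). intros n Hn. apply Hm. auto. }
  unfold w in H. lra.
Qed.

Lemma dom_mono t x y : 0 < x -> 0 < t + ln x -> x <= y -> 0 < y /\ 0 < t + ln y.
Proof. intros Hx HL Hxy. split. lra. assert (ln x <= ln y) by (apply ln_le'; lra). lra. Qed.

Ltac signtac := intros Hx HL;
  try unfold f0, f1, f2, f3, f4, g0, g1, g2, PP;
  first [ apply Rmult_le_pos; [nra | left; apply Rinv_0_lt_compat; postac]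
        | apply Rmult_lt_0_compat; [nra | apply Rinv_0_lt_compat; postac]
        | apply Rinv_0_lt_compat; postac
        | idtac ].

Lemma f0_pos t x : 0 < x -> 0 < t + ln x -> 0 < f0 t x.
Proof. signtac. Qed.
Lemma f2_pos t x : 0 < x -> 0 < t + ln x -> 0 < f2 t x.
Proof. signtac. Qed.
Lemma f3_neg t x : 0 < x -> 0 < t + ln x -> f3 t x <= 0.
Proof. intros Hx HL. unfold f3.
  cut (0 <= (2 * (t + ln x) ^ 2 + 6 * (t + ln x) + 6) / (x ^ 3 * (t + ln x) ^ 4)).
  unfold Rdiv; lra.
  apply Rmult_le_pos; [nra | left; apply Rinv_0_lt_compat; postac]. Qed.
Lemma f4_pos t x : 0 < x -> 0 < t + ln x -> 0 <= f4 t x.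
Proof. intros Hx HL. unfold f4.
  assert (0 < (t + ln x) ^ 3) by (apply pow_lt; lra).
  assert (0 < (t + ln x) ^ 2) by (apply pow_lt; lra).
  apply Rmult_le_pos; [lra | left; apply Rinv_0_lt_compat; postac]. Qed.
Lemma g0_pos t x : 0 < x -> 0 < t + ln x -> 0 < g0 t x.
Proof. signtac. Qed.
Lemma g1_neg t x : 0 < x -> 0 < t + ln x -> g1 t x <= 0.
Proof. intros Hx HL. unfold g1.
  cut (0 <= (t + ln x + 1) / (12 * x ^ 3 * (t + ln x) ^ 3)).
  unfold Rdiv; lra.
  apply Rmult_le_pos; [nra | left; apply Rinv_0_lt_compat; postac]. Qed.
Lemma g2_pos t x : 0 < x -> 0 < t + ln x -> 0 <= g2 t x.
Proof. signtac. Qed.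
Lemma PP_pos t x : 0 < x -> 0 < t + ln x -> 0 < PP t x.
Proof. signtac. Qed.

Lemma E_low t y : 0 < y -> 0 < t + ln y ->
  f0 t (y + /2) + f2 t (y + 1) / 24 <= RInt (f0 t) y (y + 1).
Proof.
  intros Hy HL.
  apply (midpoint_low (f0 t) (f1 t) (f2 t) y (f2 t (y + 1))).
  - intros z Hz. destruct (dom_mono t y z) as [A B]; try lra. apply d_f0; auto.
  - intros z Hz. destruct (dom_mono t y z) as [A B]; try lra. apply d_f1; auto.
  - intros z Hz. apply (decr_on (f2 t) (f3 t) y (y + 1)); try lra.
    + intros w Hw. destruct (dom_mono t y w) as [A B]; try lra. apply d_f2; auto.
    + intros w Hw. destruct (dom_mono t y w) as [A B]; try lra. apply f3_neg; auto.
Qed.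

Lemma E_up t y : 0 < y -> 0 < t + ln y ->
  RInt (f0 t) y (y + 1) <= f0 t (y + /2) + f2 t y / 24.
Proof.
  intros Hy HL.
  apply (midpoint_up (f0 t) (f1 t) (f2 t) y (f2 t y)).
  - intros z Hz. destruct (dom_mono t y z) as [A B]; try lra. apply d_f0; auto.
  - intros z Hz. destruct (dom_mono t y z) as [A B]; try lra. apply d_f1; auto.
  - intros z Hz. apply (decr_on (f2 t) (f3 t) y (y + 1)); try lra.
    + intros w Hw. destruct (dom_mono t y w) as [A B]; try lra. apply d_f2; auto.
    + intros w Hw. destruct (dom_mono t y w) as [A B]; try lra. apply f3_neg; auto.
Qed.

Lemma PP_step t y : 0 < y -> 0 < t + ln y ->
  PP t (y + 1) - PP t (y + 2) <= f2 t (y + 1) / 24.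
Proof.
  intros Hy HL.
  assert (H := incr_on (fun z => PP t z + f2 t (y + 1) / 24 * z)
                (fun z => mf2 t z + f2 t (y + 1) / 24) (y + 1) (y + 2)).
  assert (PP t (y + 1) + f2 t (y + 1) / 24 * (y + 1) <= PP t (y + 2) + f2 t (y + 1) / 24 * (y + 2)).
  { apply H; try lra.
    - intros z Hz. destruct (dom_mono t y z) as [A B]; try lra.
      apply (is_derive_plus (PP t) (fun z => f2 t (y + 1) / 24 * z)).
      apply d_PP; auto. auto_derive; auto. ring.
    - intros z Hz. unfold mf2.
      assert (f2 t z <= f2 t (y + 1)); [|lra].
      apply (decr_on (f2 t) (f3 t) (y + 1) (y + 2)); try lra.
      + intros w Hw. destruct (dom_mono t y w) as [A B]; try lra. apply d_f2; auto.
      + intros w Hw. destruct (dom_mono t y w) as [A B]; try lra. apply f3_neg; auto. }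
  lra.
Qed.

Lemma ex_g0 t a b : 0 < a -> 0 < t + ln a -> a <= b -> ex_RInt (g0 t) a b.
Proof.
  intros Ha HL Hab. apply (exRI (g0 t) (g1 t)); auto.
  intros z Hz. destruct (dom_mono t a z) as [A B]; try lra. apply d_g0; auto.
Qed.

Lemma ex_f0 t a b : 0 < a -> 0 < t + ln a -> a <= b -> ex_RInt (f0 t) a b.
Proof.
  intros Ha HL Hab. apply (exRI (f0 t) (f1 t)); auto.
  intros z Hz. destruct (dom_mono t a z) as [A B]; try lra. apply d_f0; auto.
Qed.

Lemma g0_step t y : 0 < y -> 0 < t + ln y ->
  RInt (g0 t) (y + 1) (y + 2) <= g0 t (y + 1).
Proof.
  intros Hy HL.
  destruct (dom_mono t y (y + 1)) as [A B]; try lra.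
  apply Rle_trans with (RInt (fun _ => g0 t (y + 1)) (y + 1) (y + 2)).
  - apply RInt_le; try lra.
    + apply ex_g0; auto. lra.
    + apply ex_RInt_const.
    + intros z Hz. apply (decr_on (g0 t) (g1 t) (y + 1) (y + 2)); try lra.
      * intros w Hw. destruct (dom_mono t y w) as [C D]; try lra. apply d_g0; auto.
      * intros w Hw. destruct (dom_mono t y w) as [C D]; try lra. apply g1_neg; auto.
  - rewrite RInt_const. simpl. unfold scal; simpl. unfold mult; simpl. lra.
Qed.

Lemma g0_mid t y : 0 < y -> 0 < t + ln y ->
  g0 t (y + /2) <= RInt (g0 t) y (y + 1).
Proof.
  intros Hy HL.
  assert (H := midpoint_low (g0 t) (g1 t) (g2 t) y 0).
  cut (g0 t (y + / 2) + 0 / 24 <= RInt (g0 t) y (y + 1)). lra.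
  apply H.
  - intros z Hz. destruct (dom_mono t y z) as [A B]; try lra. apply d_g0; auto.
  - intros z Hz. destruct (dom_mono t y z) as [A B]; try lra. apply d_g1; auto.
  - intros z Hz. destruct (dom_mono t y z) as [A B]; try lra. apply g2_pos; auto.
Qed.

Lemma f2_HH t y : 0 < y - /2 -> 0 < t + ln (y - /2) ->
  f2 t y / 24 <= PP t (y - /2) - PP t (y + /2).
Proof.
  intros Hy HL.
  assert (H := midpoint_low (f2 t) (f3 t) (f4 t) (y - /2) 0).
  replace (y - / 2 + / 2) with y in H by ring.
  replace (y - / 2 + 1) with (y + / 2) in H by field.
  assert (E : RInt (f2 t) (y - / 2) (y + / 2) = (fun z => - 24 * PP t z) (y + /2) - (fun z => - 24 * PP t z) (y - /2)).
  { apply (FTC (fun z => - 24 * PP t z) (f2 t)). lra.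
    - intros z Hz. destruct (dom_mono t (y - /2) z) as [A B]; try lra.
      unfold PP, f2. auto_derive. nztac. field. nztac.
    - intros z Hz. destruct (dom_mono t (y - /2) z) as [A B]; try lra.
      apply (deriv_continuous (f2 t) (f3 t)). apply d_f2; auto. }
  rewrite E in H. simpl in H.
  cut (f2 t y + 0 / 24 <= - 24 * PP t (y + / 2) - - 24 * PP t (y - / 2)). lra.
  apply H.
  - intros z Hz. destruct (dom_mono t (y - /2) z) as [A B]; try lra. apply d_f2; auto.
  - intros z Hz. destruct (dom_mono t (y - /2) z) as [A B]; try lra. apply d_f3; auto.
  - intros z Hz. destruct (dom_mono t (y - /2) z) as [A B]; try lra. apply f4_pos; auto.
Qed.

Lemma harm_parts gamma t k : Un_cv (fun n => harm n - ln (INR n)) gamma ->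
  (1 <= k)%nat -> 0 < t + ln (INR k) ->
  0 < harm k - gamma + t /\
  g0 t (INR k + 1) <= f0 t (INR k + /2) - / (harm k - gamma + t) <= g0 t (INR k + /2).
Proof.
  intros Hg Hk HL.
  assert (Hy : 1 <= INR k) by (replace 1 with (INR 1) by reflexivity; apply le_INR; lia).
  set (y := INR k) in *.
  assert (Dl := D_low gamma Hg k). assert (Du := D_up gamma Hg k).
  fold y in Dl, Du. unfold Dk in Dl, Du. fold y in Dl, Du.
  set (D := harm k - gamma - ln (y + / 2)) in *.
  destruct (dom_mono t y (y + /2)) as [_ Hm]; try lra.
  destruct (dom_mono t y (y + 1)) as [_ H1]; try lra.
  set (Lm := t + ln (y + /2)) in *. set (L1 := t + ln (y + 1)) in *.
  assert (Ec : harm k - gamma + t = Lm + D) by (unfold Lm, D; ring).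
  rewrite Ec.
  assert (HD0 : 0 < D). { apply Rlt_le_trans with (/ (24 * (y + 1) ^ 2)); auto.
    apply Rinv_0_lt_compat. postac. }
  assert (E : f0 t (y + / 2) - / (Lm + D) = D * / (Lm * (Lm + D))).
  { unfold f0. fold Lm. field. split; lra. }
  rewrite E.
  split; [lra|]. split.
  -
    assert (HmL1 : Lm <= L1).
    { unfold Lm, L1. assert (ln (y + /2) <= ln (y + 1)) by (apply ln_le'; lra). lra. }
    assert (Hln : ln (y + / 2) <= ln (y + 1) - / (2 * (y + 1))).
    { replace (y + / 2) with ((y + 1) * (1 + - / (2 * (y + 1)))) by (field; lra).
      rewrite ln_mult. 
      - assert (ln (1 + - / (2 * (y + 1))) <= - / (2 * (y + 1))); [|lra].
        apply ln_1p_le.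
        assert (/ (2 * (y + 1)) <= / 4) by (apply Rinv_le_contravar; lra). lra.
      - lra.
      - assert (/ (2 * (y + 1)) <= / 4) by (apply Rinv_le_contravar; lra). lra. }
    assert (HDsmall : D <= / (2 * (y + 1))).
    { apply Rle_trans with (/ (24 * (y + / 2) ^ 2)); auto.
      apply Rinv_le_contravar. lra. nra. }
    assert (Hc : Lm + D <= L1) by (unfold Lm, L1; lra).
    assert (Hprod : Lm * (Lm + D) <= L1 ^ 2).
    { simpl. rewrite Rmult_1_r. apply Rmult_le_compat; lra. }
    assert (Hinv : / (L1 ^ 2) <= / (Lm * (Lm + D))).
    { apply Rinv_le_contravar. apply Rmult_lt_0_compat; lra. auto. }
    unfold g0. fold L1.
    rewrite (Rinv_mult (24 * (y + 1) ^ 2)).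
    apply Rmult_le_compat; auto.
    + left. apply Rinv_0_lt_compat. postac.
    + left. apply Rinv_0_lt_compat. postac.
  -
    assert (Hinv : / (Lm * (Lm + D)) <= / (Lm ^ 2)).
    { apply Rinv_le_contravar. postac. simpl. rewrite Rmult_1_r.
      apply Rmult_le_compat_l; lra. }
    unfold g0. fold Lm.
    rewrite (Rinv_mult (24 * (y + / 2) ^ 2)).
    apply Rmult_le_compat; auto.
    + lra.
    + left. apply Rinv_0_lt_compat. postac.
Qed.

Definition aa gamma t k := RInt (f0 t) (INR k) (INR k + 1) - / (harm k - gamma + t).

Lemma PP_strict t y : 0 < y -> 0 < t + ln y -> PP t (y + 2) < PP t (y + 1).
Proof.
  intros Hy HL. destruct (dom_mono t y (y + 1)) as [_ H1]; try lra.
  assert (ln (y + 1) <= ln (y + 2)) by (apply ln_le'; lra).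
  unfold PP. apply Rinv_lt_contravar. postac.
  assert ((t + ln (y + 1)) ^ 2 <= (t + ln (y + 2)) ^ 2) by (apply pow_incr; lra).
  assert (0 < (t + ln (y + 1)) ^ 2) by (apply pow_lt; lra).
  nra.
Qed.

Lemma aa_bounds gamma t k : Un_cv (fun n => harm n - ln (INR n)) gamma ->
  (1 <= k)%nat -> 0 < t + ln (INR k) ->
  PP t (INR k + 1) - PP t (INR k + 2) + RInt (g0 t) (INR k + 1) (INR k + 2) <= aa gamma t k /\
  aa gamma t k <= f2 t (INR k) / 24 + RInt (g0 t) (INR k) (INR k + 1) /\
  0 < aa gamma t k.
Proof.
  intros Hg Hk HL.
  assert (Hy : 1 <= INR k) by (replace 1 with (INR 1) by reflexivity; apply le_INR; lia).
  destruct (harm_parts gamma t k Hg Hk HL) as [Hc [Hlo Hup]].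
  assert (A1 := E_low t (INR k) ltac:(lra) HL).
  assert (A2 := E_up t (INR k) ltac:(lra) HL).
  assert (A3 := PP_step t (INR k) ltac:(lra) HL).
  assert (A4 := g0_step t (INR k) ltac:(lra) HL).
  assert (A5 := g0_mid t (INR k) ltac:(lra) HL).
  assert (A6 := PP_strict t (INR k) ltac:(lra) HL).
  assert (A7 : 0 <= RInt (g0 t) (INR k + 1) (INR k + 2)).
  { destruct (dom_mono t (INR k) (INR k + 1)) as [B1 B2]; try lra.
    apply RInt_ge_0. lra. apply ex_g0; auto; lra.
    intros z Hz. destruct (dom_mono t (INR k) z) as [C1 C2]; try lra. left. apply g0_pos; auto. }
  unfold aa. repeat split; lra.
Qed.

Lemma fold_app_R (l : list R) x : fold_right Rplus 0 (l ++ x :: nil) = fold_right Rplus 0 l + x.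
Proof. induction l as [|a l IH]; simpl. ring. rewrite IH. ring. Qed.

Lemma sum_range_S h a b : (a <= b)%nat -> sum_range h a (S b) = sum_range h a b + h b.
Proof.
  intros Hab. unfold sum_range. replace (S b - a)%nat with (S (b - a)) by lia.
  rewrite seq_S, map_app. simpl map. rewrite fold_app_R. f_equal. f_equal. lia.
Qed.

Lemma sum_range_0 h a : sum_range h a a = 0.
Proof. unfold sum_range. rewrite Nat.sub_diag. reflexivity. Qed.

Lemma theta_n_base gamma t N : theta_n gamma t N N = 0.
Proof.
  unfold theta_n. rewrite sum_range_0. rewrite RInt_eq by apply ex_RInt_point.
  rewrite RInt_point. unfold zero; simpl. ring.
Qed.

Lemma theta_n_S gamma t N n : (1 <= N)%nat -> 0 < t + ln (INR N) -> (N <= n)%nat ->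
  theta_n gamma t N (S n) = theta_n gamma t N n + aa gamma t n.
Proof.
  intros HN HL Hn.
  assert (Hy : 1 <= INR N) by (replace 1 with (INR 1) by reflexivity; apply le_INR; lia).
  assert (Hnn : INR N <= INR n) by (apply le_INR; lia).
  unfold theta_n, aa. change (fun x => / (t + ln x)) with (f0 t).
  rewrite sum_range_S by auto. rewrite S_INR.
  rewrite !RInt_eq.
  - rewrite <- (RInt_Chasles (f0 t) (INR N) (INR n) (INR n + 1)).
    + unfold plus; simpl. ring.
    + apply ex_f0; auto; lra.
    + destruct (dom_mono t (INR N) (INR n)) as [B1 B2]; auto; try lra. apply ex_f0; auto; lra.
  - apply ex_f0; auto; lra.
  - apply ex_f0; auto; lra.
Qed.

Lemma theta_low gamma t n : Un_cv (fun n => harm n - ln (INR n)) gamma ->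
  (1 <= n)%nat -> 0 < t + ln (INR n) -> forall m, (n <= m)%nat ->
  RInt (g0 t) (INR n + 1) (INR m + 1) + PP t (INR n + 1) - PP t (INR m + 1) <= theta_n gamma t n m.
Proof.
  intros Hg Hn HL m Hm.
  assert (Hy : 1 <= INR n) by (replace 1 with (INR 1) by reflexivity; apply le_INR; lia).
  induction Hm as [|m Hm IH].
  - rewrite theta_n_base, RInt_point. unfold zero; simpl. lra.
  - rewrite theta_n_S by auto.
    assert (Hnm : INR n <= INR m) by (apply le_INR; lia).
    destruct (dom_mono t (INR n) (INR m)) as [B1 B2]; try lra.
    destruct (aa_bounds gamma t m Hg ltac:(lia) B2) as [L _].
    rewrite S_INR. replace (INR m + 1 + 1) with (INR m + 2) by ring.
    rewrite <- (RInt_Chasles (g0 t) (INR n + 1) (INR m + 1) (INR m + 2)).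
    + unfold plus; simpl. lra.
    + destruct (dom_mono t (INR n) (INR n + 1)) as [C1 C2]; try lra. apply ex_g0; auto. lra.
    + destruct (dom_mono t (INR n) (INR m + 1)) as [C1 C2]; try lra. apply ex_g0; auto. lra.
Qed.

Lemma theta_up gamma t n : Un_cv (fun n => harm n - ln (INR n)) gamma ->
  (1 <= n)%nat -> 0 < t + ln (INR n) -> forall m, (S n <= m)%nat ->
  theta_n gamma t n m <= RInt (g0 t) (INR n) (INR m) + f2 t (INR n) / 24 + PP t (INR n + /2) - PP t (INR m - /2).
Proof.
  intros Hg Hn HL m Hm.
  assert (Hy : 1 <= INR n) by (replace 1 with (INR 1) by reflexivity; apply le_INR; lia).
  induction Hm as [|m Hm IH].
  - rewrite theta_n_S, theta_n_base by auto.
    destruct (aa_bounds gamma t n Hg Hn HL) as [_ [U _]].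
    rewrite S_INR. replace (INR n + 1 - / 2) with (INR n + / 2) by field. lra.
  - rewrite theta_n_S by (auto; lia).
    assert (Hnm : INR n + 1 <= INR m) by (rewrite <- S_INR; apply le_INR; lia).
    destruct (dom_mono t (INR n) (INR m)) as [B1 B2]; try lra.
    destruct (dom_mono t (INR n) (INR m - /2)) as [C1 C2]; try lra.
    destruct (aa_bounds gamma t m Hg ltac:(lia) B2) as [_ [U _]].
    assert (HH := f2_HH t (INR m) C1 C2).
    rewrite S_INR. replace (INR m + 1 - / 2) with (INR m + / 2) by field.
    rewrite <- (RInt_Chasles (g0 t) (INR n) (INR m) (INR m + 1)).
    + unfold plus; simpl. lra.
    + apply ex_g0; auto. lra. lra.
    + apply ex_g0; auto. lra.
Qed.

Lemma g0_f2 t x : 0 < x -> 0 < t + ln x -> f2 t x / 24 = g0 t x * (1 + 2 / (t + ln x)).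
Proof. intros Hx HL. unfold f2, g0. field. split; lra. Qed.

Lemma d_mPP t x K : 0 < x -> 0 < t + ln x -> K <> 0 -> is_derive (fun z => - PP t z / K) x (f2 t x / 24 / K).
Proof. intros Hx HL HK. unfold PP, f2. auto_derive. nztac. field. nztac. Qed.

Lemma cont_f2K t x K : 0 < x -> 0 < t + ln x -> K <> 0 -> continuous (fun z => f2 t z / 24 / K) x.
Proof.
  intros Hx HL HK. apply (deriv_continuous _ (fun z => f3 t z / 24 / K)).
  assert (H := d_f2 t x Hx HL). unfold f2, f3 in *. auto_derive. nztac. field. nztac.
Qed.

Lemma RInt_f2K t a b K : 0 < a -> 0 < t + ln a -> a <= b -> K <> 0 ->
  RInt (fun z => f2 t z / 24 / K) a b = (PP t a - PP t b) / K.
Proof.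
  intros Ha HL Hab HK.
  rewrite (FTC (fun z => - PP t z / K)); auto.
  - simpl. field. auto.
  - intros z Hz. destruct (dom_mono t a z) as [A B]; try lra. apply d_mPP; auto.
  - intros z Hz. destruct (dom_mono t a z) as [A B]; try lra. apply cont_f2K; auto.
Qed.

Lemma ex_f2K t a b K : 0 < a -> 0 < t + ln a -> a <= b -> K <> 0 -> ex_RInt (fun z => f2 t z / 24 / K) a b.
Proof.
  intros Ha HL Hab HK. apply (@ex_RInt_continuous R_CompleteNormedModule). intros z Hz.
  rewrite Rmin_left in Hz by lra. rewrite Rmax_right in Hz by lra.
  destruct (dom_mono t a z) as [A B]; try lra. apply cont_f2K; auto.
Qed.

Lemma RInt_g0_up t a b : 0 < a -> 0 < t + ln a -> a <= b -> RInt (g0 t) a b <= PP t a - PP t b.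
Proof.
  intros Ha HL Hab.
  replace (PP t a - PP t b) with ((PP t a - PP t b) / 1) by field.
  rewrite <- (RInt_f2K t a b 1); auto; try lra.
  apply RInt_le; auto. apply ex_g0; auto. apply ex_f2K; auto; lra.
  intros z Hz. destruct (dom_mono t a z) as [A B]; try lra.
  rewrite g0_f2 by auto.
  assert (0 < g0 t z) by (apply g0_pos; auto).
  assert (0 < 2 / (t + ln z)) by (unfold Rdiv; apply Rmult_lt_0_compat; [lra| apply Rinv_0_lt_compat; lra]).
  unfold Rdiv at 1. rewrite Rinv_1. nra.
Qed.

Lemma RInt_g0_low t a b : 0 < a -> 0 < t + ln a -> a <= b ->
  (PP t a - PP t b) / (1 + 2 / (t + ln a)) <= RInt (g0 t) a b.
Proof.
  intros Ha HL Hab.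
  assert (HK : 0 < 2 / (t + ln a)) by (unfold Rdiv; apply Rmult_lt_0_compat; [lra| apply Rinv_0_lt_compat; lra]).
  rewrite <- (RInt_f2K t a b (1 + 2 / (t + ln a))); auto; try lra.
  apply RInt_le; auto. apply ex_f2K; auto; lra. apply ex_g0; auto.
  intros z Hz. destruct (dom_mono t a z) as [A B]; try lra.
  rewrite g0_f2 by auto.
  assert (0 < g0 t z) by (apply g0_pos; auto).
  assert (2 / (t + ln z) <= 2 / (t + ln a)).
  { unfold Rdiv. apply Rmult_le_compat_l. lra. apply Rinv_le_contravar. lra.
    assert (ln a <= ln z) by (apply ln_le'; lra). lra. }
  apply (Rmult_le_reg_r (1 + 2 / (t + ln a))). lra.
  unfold Rdiv at 1. rewrite Rmult_assoc, Rinv_l by lra. nra.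
Qed.

Lemma PP_small t a : 0 < a -> 0 < t + ln a -> forall eps, 0 < eps ->
  exists M, a <= M /\ forall b, M <= b -> PP t b <= eps.
Proof.
  intros Ha HL eps Heps.
  set (La := t + ln a) in *.
  exists (a + / (24 * eps * La ^ 2)). split.
  - assert (0 < / (24 * eps * La ^ 2)) by (apply Rinv_0_lt_compat; postac). lra.
  - intros b Hb.
    assert (0 < / (24 * eps * La ^ 2)) by (apply Rinv_0_lt_compat; postac).
    destruct (dom_mono t a b) as [B1 B2]; try exact HL; try lra.
    assert (HLb : La <= t + ln b) by (unfold La; assert (ln a <= ln b) by (apply ln_le'; lra); lra).
    unfold PP.
    rewrite <- (Rinv_inv eps).
    apply Rinv_le_contravar. apply Rinv_0_lt_compat; lra.
    assert (Hb' : / (24 * eps * La ^ 2) <= b) by lra.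
    assert (La ^ 2 <= (t + ln b) ^ 2) by (apply pow_incr; unfold La in *; lra).
    assert (E : / eps = 24 * / (24 * eps * La ^ 2) * La ^ 2) by (field; split; lra).
    rewrite E.
    assert (0 < La ^ 2) by (apply pow_lt; lra).
    apply Rle_trans with (24 * b * La ^ 2).
    + apply Rmult_le_compat_r; lra.
    + apply Rmult_le_compat_l; lra.
Qed.

Lemma le_eps x y : (forall eps, 0 < eps -> x <= y + eps) -> x <= y.
Proof.
  intros H. destruct (Rle_or_lt x y) as [|Hlt]; auto.
  specialize (H ((x - y) / 2) ltac:(lra)). lra.
Qed.

Lemma RInt_g0_mono t a b0 b : 0 < a -> 0 < t + ln a -> a <= b0 -> b0 <= b ->
  RInt (g0 t) a b0 <= RInt (g0 t) a b.
Proof.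
  intros Ha HL H1 H2.
  destruct (dom_mono t a b0) as [C1 C2]; try lra.
  rewrite <- (RInt_Chasles (g0 t) a b0 b).
  - assert (0 <= RInt (g0 t) b0 b); [|unfold plus; simpl; lra].
    apply RInt_ge_0; auto. apply ex_g0; auto.
    intros z Hz. destruct (dom_mono t a z) as [D1 D2]; try lra. left. apply g0_pos; auto.
  - apply ex_g0; auto.
  - apply ex_g0; auto.
Qed.

Lemma improper_g0 t a : 0 < a -> 0 < t + ln a ->
  exists I, improper_int_cv (fun x => / (24 * x ^ 2 * (t + ln x) ^ 2)) a I
   /\ (forall b, a <= b -> RInt (g0 t) a b <= I)
   /\ (forall eps, 0 < eps -> exists M, a <= M /\ forall b, M <= b -> I - eps < RInt (g0 t) a b)
   /\ PP t a / (1 + 2 / (t + ln a)) <= I <= PP t a.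
Proof.
  intros Ha HL.
  set (E := fun v => exists b, a <= b /\ v = RInt (g0 t) a b).
  assert (HPa := PP_pos t a Ha HL).
  assert (Hub : forall v, E v -> v <= PP t a).
  { intros v [b [Hb ->]]. destruct (dom_mono t a b) as [B1 B2]; try lra.
    assert (H1 := RInt_g0_up t a b Ha HL Hb). assert (H2 := PP_pos t b B1 B2). lra. }
  destruct (completeness E) as [I [HI1 HI2]].
  - exists (PP t a). intros v Hv. apply Hub; auto.
  - exists (RInt (g0 t) a a). exists a. split; auto. lra.
  - assert (Hle : forall b, a <= b -> RInt (g0 t) a b <= I).
    { intros b Hb. apply HI1. exists b. auto. }
    assert (Hgt : forall eps, 0 < eps -> exists M, a <= M /\ forall b, M <= b -> I - eps < RInt (g0 t) a b).
    { intros eps Heps.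
      destruct (classic (exists b, a <= b /\ I - eps < RInt (g0 t) a b)) as [[b0 [Hb0 Hlt]]|Hn].
      - exists b0. split; auto. intros b Hb.
        assert (RInt (g0 t) a b0 <= RInt (g0 t) a b) by (apply RInt_g0_mono; auto). lra.
      - exfalso.
        assert (I <= I - eps); [|lra].
        apply HI2. intros v [b [Hb ->]].
        destruct (Rle_or_lt (RInt (g0 t) a b) (I - eps)) as [|Hlt]; auto.
        exfalso. apply Hn. exists b. auto. }
    exists I. split; [|split; [auto|split; [auto|split]]].
    + intros eps Heps. destruct (Hgt eps Heps) as [M [HM HMb]].
      exists M. intros b Hb.
      rewrite RInt_eq.
      * change (fun x => / (24 * x ^ 2 * (t + ln x) ^ 2)) with (g0 t).
        specialize (HMb b Hb). assert (RInt (g0 t) a b <= I) by (apply Hle; lra).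
        apply Rabs_def1; lra.
      * apply ex_g0; auto. lra.
    + set (K := 1 + 2 / (t + ln a)).
      assert (HK : 1 < K).
      { unfold K. assert (0 < 2 / (t + ln a)) by (unfold Rdiv; apply Rmult_lt_0_compat; [lra| apply Rinv_0_lt_compat; lra]). lra. }
      apply le_eps. intros eps Heps.
      destruct (PP_small t a Ha HL (eps * K)) as [M [HM HMb]]. nra.
      specialize (HMb M (Rle_refl M)).
      assert (H1 := RInt_g0_low t a M Ha HL HM). fold K in H1.
      assert (H2 := Hle M HM).
      assert (H3 : (PP t a - eps * K) / K <= (PP t a - PP t M) / K).
      { unfold Rdiv. apply Rmult_le_compat_r. left. apply Rinv_0_lt_compat. lra. lra. }
      replace ((PP t a - eps * K) / K) with (PP t a / K - eps) in H3 by (field; lra).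
      lra.
    + apply HI2. intros v Hv. apply Hub; auto.
Qed.

Lemma nat_above X : exists m : nat, X <= INR m.
Proof.
  destruct (archimed X) as [H1 H2].
  destruct (Z_le_gt_dec 0 (up X)) as [Hz|Hz].
  - exists (Z.to_nat (up X)). rewrite INR_IZR_INZ, Z2Nat.id by auto. lra.
  - exists 0%nat. simpl. apply Z.gt_lt in Hz. apply IZR_lt in Hz. lra.
Qed.

Lemma cv_ev_eq (u v : nat -> R) l n0 : (forall m, (n0 <= m)%nat -> u m = v m) -> Un_cv u l -> Un_cv v l.
Proof.
  intros He Hu eps Heps. destruct (Hu eps Heps) as [N HN]. exists (max N n0).
  intros m Hm. rewrite <- He by lia. apply HN. lia.
Qed.

Lemma theta_cv gamma t n : Un_cv (fun n => harm n - ln (INR n)) gamma ->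
  (1 <= n)%nat -> 0 < t + ln (INR n) ->
  Un_cv (theta_n gamma t n) (theta gamma t n) /\
  (forall m, (n <= m)%nat -> theta_n gamma t n m < theta_n gamma t n (S m)) /\
  (forall m, (n <= m)%nat -> theta_n gamma t n m <= theta gamma t n) /\
  (forall m, (n <= m)%nat -> theta_n gamma t n m <= PP t (INR n) + f2 t (INR n) / 24 + PP t (INR n + /2)).
Proof.
  intros Hg Hn HL.
  assert (Hy : 1 <= INR n) by (replace 1 with (INR 1) by reflexivity; apply le_INR; lia).
  assert (Hinc : forall m, (n <= m)%nat -> theta_n gamma t n m < theta_n gamma t n (S m)).
  { intros m Hm. rewrite theta_n_S by auto.
    assert (INR n <= INR m) by (apply le_INR; lia).
    destruct (dom_mono t (INR n) (INR m)) as [B1 B2]; try lra.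
    destruct (aa_bounds gamma t m Hg ltac:(lia) B2) as [_ [_ P]]. lra. }
  assert (HB : forall m, (n <= m)%nat -> theta_n gamma t n m <= PP t (INR n) + f2 t (INR n) / 24 + PP t (INR n + /2)).
  { intros m Hm.
    assert (H1 := PP_pos t (INR n) ltac:(lra) HL).
    destruct (dom_mono t (INR n) (INR n + /2)) as [C1 C2]; try lra.
    assert (H2 := PP_pos t (INR n + /2) C1 C2).
    assert (H3 := f2_pos t (INR n) ltac:(lra) HL).
    destruct (le_lt_eq_dec _ _ Hm) as [Hlt|Heq].
    - assert (U := theta_up gamma t n Hg Hn HL m Hlt).
      assert (Hnm : INR n + 1 <= INR m) by (rewrite <- S_INR; apply le_INR; lia).
      destruct (dom_mono t (INR n) (INR m - /2)) as [D1 D2]; try lra.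
      assert (H4 := PP_pos t (INR m - /2) D1 D2).
      assert (H5 := RInt_g0_up t (INR n) (INR m) ltac:(lra) HL ltac:(lra)).
      destruct (dom_mono t (INR n) (INR m)) as [E1 E2]; try lra.
      assert (H6 := PP_pos t (INR m) E1 E2).
      lra.
    - subst m. rewrite theta_n_base. lra. }
  set (V := fun k => theta_n gamma t n (n + k)).
  destruct (growing_cv V) as [l Hl].
  - intros k. unfold V. rewrite <- plus_n_Sm. left. apply Hinc. lia.
  - exists (PP t (INR n) + f2 t (INR n) / 24 + PP t (INR n + /2)). intros r [i ->].
    unfold V. apply HB. lia.
  - assert (Hcv : Un_cv (theta_n gamma t n) l).
    { intros eps Heps. destruct (Hl eps Heps) as [N0 HN0]. exists (n + N0)%nat.
      intros m Hm. specialize (HN0 (m - n)%nat ltac:(lia)). unfold V in HN0.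
      replace (n + (m - n))%nat with m in HN0 by lia. auto. }
    assert (Hth : theta gamma t n = l).
    { unfold theta.
      assert (Hs := epsilon_spec (inhabits 0) (fun l => Un_cv (fun m => theta_n gamma t n m) l) (ex_intro _ l Hcv)).
      simpl in Hs. apply (UL_sequence (theta_n gamma t n)); auto. }
    rewrite Hth. split; [auto|split; [auto|split; [|auto]]].
    intros m Hm. apply (cv_ge (theta_n gamma t n) l (theta_n gamma t n m) m Hcv).
    intros k Hk. induction Hk. lra. assert (theta_n gamma t n m0 < theta_n gamma t n (S m0)) by (apply Hinc; lia). lra.
Qed.

Lemma theta_split gamma t N n : Un_cv (fun n => harm n - ln (INR n)) gamma ->
  (1 <= N)%nat -> 0 < t + ln (INR N) -> (N <= n)%nat ->
  theta gamma t N - theta_n gamma t N n = theta gamma t n.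
Proof.
  intros Hg HN HL Hn.
  assert (Hy : 1 <= INR N) by (replace 1 with (INR 1) by reflexivity; apply le_INR; lia).
  assert (HNn : INR N <= INR n) by (apply le_INR; lia).
  destruct (dom_mono t (INR N) (INR n)) as [B1 B2]; try lra.
  assert (Hs : forall m, (n <= m)%nat -> theta_n gamma t N m - theta_n gamma t N n = theta_n gamma t n m).
  { intros m Hm. induction Hm.
    - rewrite theta_n_base. ring.
    - rewrite !theta_n_S by (auto; lia). lra. }
  destruct (theta_cv gamma t N Hg HN HL) as [CN _].
  destruct (theta_cv gamma t n Hg ltac:(lia) B2) as [Cn _].
  assert (C2 : Un_cv (fun m => theta_n gamma t N m - theta_n gamma t N n) (theta gamma t N - theta_n gamma t N n)).
  { apply CV_minus; auto. intros eps Heps. exists 0%nat. intros. unfold R_dist. rewrite Rminus_diag, Rabs_R0. auto. }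
  apply (cv_ev_eq _ (theta_n gamma t n) _ n) in C2; auto.
  apply (UL_sequence (theta_n gamma t n)); auto.
Qed.

Lemma theta_bnds gamma t n : Un_cv (fun n => harm n - ln (INR n)) gamma ->
  (1 <= n)%nat -> 0 < t + ln (INR n) ->
  exists I1 I2,
    improper_int_cv (fun x => / (24 * x ^ 2 * (t + ln x) ^ 2)) (INR n + 1) I1 /\
    improper_int_cv (fun x => / (24 * x ^ 2 * (t + ln x) ^ 2)) (INR n) I2 /\
    I1 + PP t (INR n + 1) <= theta gamma t n /\
    theta gamma t n <= I2 + PP t (INR n + /2) + f2 t (INR n) / 24 /\
    PP t (INR n + 1) / (1 + 2 / (t + ln (INR n + 1))) <= I1 /\ I2 <= PP t (INR n).
Proof.
  intros Hg Hn HL.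
  assert (Hy : 1 <= INR n) by (replace 1 with (INR 1) by reflexivity; apply le_INR; lia).
  destruct (dom_mono t (INR n) (INR n + 1)) as [B1 B2]; try lra.
  destruct (improper_g0 t (INR n + 1) B1 B2) as [I1 [Hi1 [Hle1 [Hgt1 [Hlo1 Hup1]]]]].
  destruct (improper_g0 t (INR n) ltac:(lra) HL) as [I2 [Hi2 [Hle2 [Hgt2 [Hlo2 Hup2]]]]].
  destruct (theta_cv gamma t n Hg Hn HL) as [Cv [Hinc [Hle _]]].
  exists I1, I2. split; [auto|split; [auto|split; [|split; [|split; auto]]]].
  - apply le_eps. intros eps Heps.
    destruct (Hgt1 (eps / 2) ltac:(lra)) as [M1 [HM1 HM1b]].
    destruct (PP_small t (INR n + 1) B1 B2 (eps / 2) ltac:(lra)) as [M2 [HM2 HM2b]].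
    destruct (nat_above (M1 + M2 + INR n)) as [m Hm].
    assert (HMn : (n <= m)%nat).
    { apply INR_le. assert (0 <= M1 + M2 - 2 * INR n - 2 + INR n) by lra. lra. }
    assert (Lw := theta_low gamma t n Hg Hn HL m HMn).
    assert (Th := Hle m HMn).
    specialize (HM1b (INR m + 1) ltac:(lra)). specialize (HM2b (INR m + 1) ltac:(lra)).
    lra.
  - apply (cv_le (theta_n gamma t n) _ _ (S n) Cv).
    intros m Hm. assert (U := theta_up gamma t n Hg Hn HL m Hm).
    assert (Hnm : INR n + 1 <= INR m) by (rewrite <- S_INR; apply le_INR; lia).
    destruct (dom_mono t (INR n) (INR m - /2)) as [D1 D2]; try lra.
    assert (H4 := PP_pos t (INR m - /2) D1 D2).
    assert (H5 := Hle2 (INR m) ltac:(lra)).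
    lra.
Qed.

Lemma PP_mono t a b : 0 < a -> 0 < t + ln a -> a <= b -> PP t b <= PP t a.
Proof.
  intros Ha HL Hab. apply (decr_on (PP t) (mf2 t) a b); try lra.
  - intros z Hz. destruct (dom_mono t a z) as [A B]; try lra. apply d_PP; auto.
  - intros z Hz. destruct (dom_mono t a z) as [A B]; try lra. unfold mf2.
    assert (0 < f2 t z) by (apply f2_pos; auto). lra.
Qed.

Lemma cv_const c : Un_cv (fun _ => c) c.
Proof. intros eps Heps. exists 0%nat. intros. unfold R_dist. rewrite Rminus_diag, Rabs_R0. auto. Qed.

Lemma cv_eq (u : nat -> R) l l' : Un_cv u l -> l = l' -> Un_cv u l'.
Proof. intros H ->. auto. Qed.

Lemma squeeze (lo x hi : nat -> R) l n0 : (forall n, (n0 <= n)%nat -> lo n <= x n <= hi n) ->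
  Un_cv lo l -> Un_cv hi l -> Un_cv x l.
Proof.
  intros Hb Hl Hh eps Heps. destruct (Hl eps Heps) as [N1 H1]. destruct (Hh eps Heps) as [N2 H2].
  exists (max n0 (max N1 N2)). intros n Hn.
  specialize (H1 n ltac:(lia)). specialize (H2 n ltac:(lia)). specialize (Hb n ltac:(lia)).
  unfold R_dist in *. apply Rabs_def2 in H1. apply Rabs_def2 in H2. apply Rabs_def1; lra.
Qed.

Lemma inv_ln_cv t c : 0 <= c ->
  (exists N0, forall n, (N0 <= n)%nat -> 0 < t + ln (INR n + c)) /\
  Un_cv (fun n => / (t + ln (INR n + c))) 0.
Proof.
  intros Hc.
  assert (Key : forall A, exists N0, forall n, (N0 <= n)%nat -> A <= t + ln (INR n + c)).
  { intros A. destruct (nat_above (exp (A - t))) as [m Hm]. exists m. intros n Hn.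
    assert (Q1 : INR m <= INR n) by (apply le_INR; lia).
    assert (Q2 : 0 < exp (A - t)) by apply exp_pos.
    assert (Q3 : ln (exp (A - t)) <= ln (INR n + c)) by (apply ln_le'; lra).
    rewrite ln_exp in Q3. lra. }
  split.
  - destruct (Key 1) as [N0 HN0]. exists N0. intros n Hn. specialize (HN0 n Hn). lra.
  - intros eps Heps. destruct (Key (2 / eps)) as [N0 HN0]. exists N0. intros n Hn.
    specialize (HN0 n Hn). unfold R_dist. rewrite Rminus_0_r.
    assert (0 < 2 / eps) by (unfold Rdiv; apply Rmult_lt_0_compat; [lra|apply Rinv_0_lt_compat; lra]).
    rewrite Rabs_right by (left; apply Rinv_0_lt_compat; lra).
    apply Rle_lt_trans with (/ (2 / eps)). apply Rinv_le_contravar; lra.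
    replace (/ (2 / eps)) with (eps / 2) by (field; lra). lra.
Qed.

Lemma main_3a gamma t N : Un_cv (fun n => harm n - ln (INR n)) gamma ->
  (1 <= N)%nat -> 0 < t + ln (INR N) ->
  Un_cv (fun n => (theta gamma t N - theta_n gamma t N n) * (12 * INR n * ln (INR n) ^ 2)) 1.
Proof.
  intros Hg HN HL.
  destruct (inv_ln_cv t 0 (Rle_refl 0)) as [[N1 HN1] Cw].
  destruct (inv_ln_cv t 1 ltac:(lra)) as [[N2 HN2] Cw1].
  set (w := fun n => / (t + ln (INR n + 0))) in *.
  set (w1 := fun n => / (t + ln (INR n + 1))) in *.
  set (r := fun n => 1 - t * w n).
  set (d := fun n => ln (INR n + 1) - ln (INR n)).
  set (s := fun n => 1 - (t + d n) * w1 n).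
  set (hi := fun n => r n * r n + / 2 * (r n * r n) * ((1 + 2 * w n) * / INR n)).
  set (lo := fun n => (1 - / (INR n + 1)) * (s n * s n) * (1 - w1 n)).
  assert (Cr : Un_cv r 1).
  { unfold r. eapply cv_eq. apply CV_minus. apply cv_const.
    apply CV_mult. apply cv_const. exact Cw. ring. }
  assert (Cinv : Un_cv (fun n => / INR n) 0).
  { apply cv0_bound. intros n Hn. assert (0 < INR n) by (apply lt_0_INR; lia). split; [left; apply Rinv_0_lt_compat|]; lra. }
  assert (Cd : Un_cv d 0).
  { apply cv0_bound. intros n Hn. assert (0 < INR n) by (apply lt_0_INR; lia). unfold d.
    replace (INR n + 1) with (INR n * (1 + / INR n)) by (field; lra).
    assert (0 < / INR n) by (apply Rinv_0_lt_compat; lra).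
    rewrite ln_mult by lra.
    assert (0 <= ln (1 + / INR n)) by (rewrite <- ln_1; apply ln_le'; lra).
    assert (ln (1 + / INR n) <= / INR n) by (apply ln_1p_le; lra). lra. }
  assert (Cs : Un_cv s 1).
  { unfold s. eapply cv_eq. apply CV_minus. apply cv_const.
    apply CV_mult. apply CV_plus. apply cv_const. exact Cd. exact Cw1. ring. }
  assert (Chi : Un_cv hi 1).
  { unfold hi. eapply cv_eq with (l := 1 * 1 + / 2 * (1 * 1) * ((1 + 2 * 0) * 0)); [|field].
    apply CV_plus. apply CV_mult; auto. apply CV_mult. apply CV_mult. apply cv_const.
    apply CV_mult; auto. apply CV_mult. apply CV_plus. apply cv_const. apply CV_mult. apply cv_const. auto. auto. }
  assert (Clo : Un_cv lo 1).
  { unfold lo. eapply cv_eq with (l := (1 - 0) * (1 * 1) * (1 - 0)); [|field].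
    apply CV_mult. apply CV_mult. apply CV_minus. apply cv_const.
    apply cv0_bound. intros n Hn. assert (0 < INR n) by (apply lt_0_INR; lia). split.
    left; apply Rinv_0_lt_compat; lra. apply Rinv_le_contravar; lra.
    apply CV_mult; auto. apply CV_minus. apply cv_const. auto. }
  apply (squeeze lo _ hi 1 (max (max N 2) (max N1 N2))); auto.
  intros n Hn.
  assert (Hn2 : 2 <= INR n) by (replace 2 with (INR 2) by reflexivity; apply le_INR; lia).
  assert (HNn : INR N <= INR n) by (apply le_INR; lia).
  assert (Hy : 1 <= INR N) by (replace 1 with (INR 1) by reflexivity; apply le_INR; lia).
  destruct (dom_mono t (INR N) (INR n)) as [B1 B2]; try lra.
  destruct (dom_mono t (INR N) (INR n + 1)) as [C1 C2]; try lra.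
  destruct (dom_mono t (INR N) (INR n + /2)) as [D1 D2]; try lra.
  rewrite (theta_split gamma t N n Hg HN HL) by lia.
  destruct (theta_bnds gamma t n Hg ltac:(lia) B2) as [I1 [I2 [_ [_ [T1 [T2 [T3 T4]]]]]]].
  assert (Hln : 0 < ln (INR n)) by (rewrite <- ln_1; apply ln_increasing; lra).
  assert (HF : 0 <= 12 * INR n * ln (INR n) ^ 2) by (apply Rmult_le_pos; [lra|apply pow_le; lra]).
  set (F := 12 * INR n * ln (INR n) ^ 2) in *.
  assert (HPP1 := PP_pos t (INR n + 1) C1 C2).
  assert (HPPm := PP_mono t (INR n) (INR n + /2) B1 B2 ltac:(lra)).
  set (L := t + ln (INR n)) in *. set (L1 := t + ln (INR n + 1)) in *.
  assert (Ew : w n = / L) by (unfold w, L; rewrite Rplus_0_r; auto).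
  assert (Ew1 : w1 n = / L1) by (unfold w1, L1; auto).
  assert (HK : PP t (INR n + 1) * (1 - 2 * / L1) <= PP t (INR n + 1) / (1 + 2 / L1)).
  { assert (0 < / L1) by (apply Rinv_0_lt_compat; lra).
    unfold Rdiv. apply Rmult_le_compat_l. lra.
    apply (Rmult_le_reg_r (1 + 2 * / L1)). lra.
    rewrite Rinv_l by lra. nra. }
  split.
  - apply Rle_trans with ((PP t (INR n + 1) + PP t (INR n + 1) * (1 - 2 * / L1)) * F).
    + right. unfold lo, s, d. rewrite Ew1.
      replace (t + (ln (INR n + 1) - ln (INR n))) with (L1 - ln (INR n)) by (unfold L1; ring).
      unfold PP, F. fold L1. field. repeat split; lra.
    + apply Rmult_le_compat_r; auto. lra.
  - apply Rle_trans with ((2 * PP t (INR n) + f2 t (INR n) / 24) * F).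
    + apply Rmult_le_compat_r; auto. lra.
    + right. unfold hi, r. rewrite Ew. unfold PP, f2, F. fold L.
      replace (ln (INR n)) with (L - t) by (unfold L; ring). field. repeat split; lra.
Qed.

Lemma main_3b gamma : Un_cv (fun n => harm n - ln (INR n)) gamma ->
  exists C T : R, forall (N : nat) (t : R), (1 <= N)%nat -> T <= t ->
     Rabs (theta gamma t N) <= C / (INR N * t ^ 2).
Proof.
  intros Hg. exists 1, 1. intros N t HN Ht.
  assert (Hy : 1 <= INR N) by (replace 1 with (INR 1) by reflexivity; apply le_INR; lia).
  assert (Hln : 0 <= ln (INR N)) by (rewrite <- ln_1; apply ln_le'; lra).
  assert (HL : 0 < t + ln (INR N)) by lra.
  destruct (dom_mono t (INR N) (INR N + 1)) as [C1 C2]; try lra.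
  destruct (theta_bnds gamma t N Hg HN HL) as [I1 [I2 [_ [_ [T1 [T2 [T3 T4]]]]]]].
  assert (HPP1 := PP_pos t (INR N + 1) C1 C2).
  assert (0 < PP t (INR N + 1) / (1 + 2 / (t + ln (INR N + 1)))).
  { unfold Rdiv. apply Rmult_lt_0_compat; auto. apply Rinv_0_lt_compat.
    assert (0 < 2 * / (t + ln (INR N + 1))) by (apply Rmult_lt_0_compat; [lra|apply Rinv_0_lt_compat; lra]). lra. }
  rewrite Rabs_right by lra.
  assert (HPPm := PP_mono t (INR N) (INR N + /2) ltac:(lra) HL ltac:(lra)).
  apply Rle_trans with (2 * PP t (INR N) + f2 t (INR N) / 24); [lra|].
  set (x := INR N) in *. set (L := t + ln x) in *.
  assert (HtL : 1 <= t <= L) by (unfold L; lra).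
  assert (E : 2 * PP t x + f2 t x / 24 = (2 * x * L + L + 2) * / (24 * x ^ 2 * L ^ 3)).
  { unfold PP, f2. fold L. field. split; lra. }
  rewrite E.
  apply Rle_trans with ((5 * x * L) * / (24 * x ^ 2 * L ^ 3)).
  { assert (HL1 : 1 <= L) by (unfold L; lra).
    apply Rmult_le_compat_r. left; apply Rinv_0_lt_compat; postac.
    assert (0 <= (x - 1) * (L - 1)) by (apply Rmult_le_pos; lra). nra. }
  replace ((5 * x * L) * / (24 * x ^ 2 * L ^ 3)) with (5 / 24 * / (x * L ^ 2)) by (field; split; lra).
  unfold Rdiv. rewrite Rmult_1_l.
  apply Rle_trans with (5 / 24 * / (x * t ^ 2)).
  - apply Rmult_le_compat_l. lra. apply Rinv_le_contravar. postac.
    apply Rmult_le_compat_l. lra. apply pow_incr. lra.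
  - assert (0 < / (x * t ^ 2)) by (apply Rinv_0_lt_compat; postac). lra.
Qed.

Theorem theorem3p3 (gamma : R)
  (Hgamma : Un_cv (fun n => harm n - ln (INR n)) gamma) :
  (forall (N : nat) (t : R), (1 <= N)%nat -> - ln (INR N) < t ->
    (* (1) *)
    ((forall n, (N < n)%nat -> 0 < theta_n gamma t N n) /\
     (forall n, (N < n)%nat -> theta_n gamma t N n < theta_n gamma t N (S n)) /\
     (exists M, forall n, (N < n)%nat -> theta_n gamma t N n <= M) /\
     Un_cv (fun n => theta_n gamma t N n) (theta gamma t N) /\
     0 < theta gamma t N) /\
    (* (2) *)
    (forall n : nat, (N <= n)%nat ->
       theta gamma t N - theta_n gamma t N n = theta gamma t n /\
       exists I1 I2,
         improper_int_cv (fun x => / (24 * x ^ 2 * (t + ln x) ^ 2)) (INR n + 1) I1 /\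
         improper_int_cv (fun x => / (24 * x ^ 2 * (t + ln x) ^ 2)) (INR n) I2 /\
         I1 + / (24 * (INR n + 1) * (t + ln (INR n + 1)) ^ 2) <= theta gamma t n /\
         theta gamma t n <=
           I2 + / (24 * (INR n + / 2) * (t + ln (INR n + / 2)) ^ 2)
              + / (24 * INR n ^ 2 * (t + ln (INR n)) ^ 2)
              + / (12 * INR n ^ 2 * (t + ln (INR n)) ^ 3)) /\
    (* (3a) *)
    Un_cv (fun n => (theta gamma t N - theta_n gamma t N n)
                    * (12 * INR n * ln (INR n) ^ 2)) 1)
  /\
  (* (3b): theta(t,N) = O(1/(N t^2)) as t -> oo, uniformly in N *)
  (exists C T : R, forall (N : nat) (t : R), (1 <= N)%nat -> T <= t ->
     Rabs (theta gamma t N) <= C / (INR N * t ^ 2)).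
Proof.
  split; [|apply main_3b; auto].
  intros N t HN Ht.
  assert (HL : 0 < t + ln (INR N)) by lra.
  assert (Hy : 1 <= INR N) by (replace 1 with (INR 1) by reflexivity; apply le_INR; lia).
  destruct (theta_cv gamma t N Hgamma HN HL) as [Cv [Hinc [Hle HB]]].
  assert (Hpos : forall n, (N < n)%nat -> 0 < theta_n gamma t N n).
  { intros n Hn. induction Hn.
    - assert (H := Hinc N (le_n N)). rewrite theta_n_base in H. auto.
    - assert (H := Hinc m ltac:(lia)). lra. }
  split; [|split].
  - split; [auto|split; [|split; [|split; [auto|]]]].
    + intros n Hn. apply Hinc. lia.
    + exists (PP t (INR N) + f2 t (INR N) / 24 + PP t (INR N + /2)). intros n Hn. apply HB. lia.
    + assert (H1 := Hpos (S N) ltac:(lia)). assert (H2 := Hle (S N) ltac:(lia)). lra.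
  - intros n Hn. split.
    + apply theta_split; auto.
    + assert (HNn : INR N <= INR n) by (apply le_INR; lia).
      destruct (dom_mono t (INR N) (INR n)) as [B1 B2]; try lra.
      destruct (theta_bnds gamma t n Hgamma ltac:(lia) B2) as [I1 [I2 [Hi1 [Hi2 [T1 [T2 _]]]]]].
      exists I1, I2. split; [auto|split; [auto|split]].
      * exact T1.
      * assert (E : f2 t (INR n) / 24 = / (24 * INR n ^ 2 * (t + ln (INR n)) ^ 2) + / (12 * INR n ^ 2 * (t + ln (INR n)) ^ 3)).
        { unfold f2. field. split; lra. }
        unfold PP in T2. lra.
  - apply main_3a; auto.
Qed.
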